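(* Let $m$ be a positive integer written in binary as $m=\sum_{j=1}^{s}2^{m_j}$ with natural numbers $m_1>m_2>\dots>m_s\ge0$. Then $s_k(m)=0$ for all natural numbers $k\ne m_1,\,m_1-1$.
   Context: For a natural number $m>0$ and $k\in\{0,1,2,\dots\}$, let $S_k(m)$ be the set of all finite sequences $((m_1,l_1),(m_2,l_2),\dots,(m_t,l_t))$ with $t\ge1$ of pairs of natural numbers such that $k=m_1>m_2>\dots>m_t\ge0$, $m_j\ge l_j\ge0$ for $j=1,\dots,t$, and $m=\sum_{j=1}^{t}\sum_{p=0}^{l_j}2^{m_j-p}$. Let $s_k(m)=|S_k(m)|$. (In the claim, the $m_j$ denote the binary digits positions of $m$, independent of the notation inside the definition of $S_k(m)$.) *)

(* Defs.v *)
From mathcomp Require Import all_boot.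
Set Implicit Arguments. Unset Strict Implicit. Unset Printing Implicit Defensive.

Definition pair_val (x : nat * nat) : nat :=
  \sum_(0 <= p < x.2.+1) 2 ^ (x.1 - p).

(* Membership in S_k(m): the sequence ((m_1,l_1),...,(m_t,l_t)) with t >= 1,
   k = m_1 > m_2 > ... > m_t >= 0, m_j >= l_j >= 0, and
   m = sum_j sum_{p=0}^{l_j} 2^(m_j - p). *)
Definition in_S (k m : nat) (s : seq (nat * nat)) : Prop :=
  [/\ 0 < size s,
      head 0 (map fst s) = k,
      sorted gtn (map fst s),
      all (fun x : nat * nat => x.2 <= x.1) s
    & m = \sum_(x <- s) pair_val x].

(* s_k(m) = |S_k(m)| = 0 iff S_k(m) is empty. *)
Definition s_is_zero (k m : nat) : Prop := forall s, ~ in_S k m s.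

(* Main.v *)
Require Import Defs.
From mathcomp Require Import all_boot.
From mathcomp Require Import zify.

Lemma gtn_trans : transitive gtn.
Proof. move=> a b c /= H1 H2; lia. Qed.

Lemma pv_id a l : l <= a -> \sum_(0 <= p < l.+1) 2 ^ (a - p) + 2 ^ (a - l) = 2 ^ a.+1.
Proof.
elim: l => [|l IH] Hl.
  by rewrite big_nat1 subn0 expnS mul2n addnn.
rewrite big_nat_recr //= -addnA.
have -> : 2 ^ (a - l.+1) + 2 ^ (a - l.+1) = 2 ^ (a - l).
  have -> : a - l = (a - l.+1).+1 by lia.
  by rewrite expnS mul2n addnn.
apply: IH; lia.
Qed.

Lemma pv_lt x : x.2 <= x.1 -> pair_val x < 2 ^ x.1.+1.
Proof.
move=> H; rewrite /pair_val -(@pv_id x.1 x.2 H).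
have := expn_gt0 2 (x.1 - x.2); lia.
Qed.

Lemma pv_ge x : 2 ^ x.1 <= pair_val x.
Proof. by rewrite /pair_val big_ltn // subn0 leq_addr. Qed.

Lemma sum_pv_lt n s : sorted gtn (map fst s) -> all (fun x : nat * nat => x.2 <= x.1) s ->
  all (fun x : nat * nat => x.1 < n) s -> \sum_(x <- s) pair_val x < 2 ^ n.+1.
Proof.
elim: s n => [|x s IH] n /=; first by rewrite big_nil expn_gt0.
move=> Hs /andP[Hx Ha] /andP[Hxn Hn].
rewrite big_cons.
have Hp : path gtn x.1 (map fst s) by [].
have Hall := order_path_min gtn_trans Hp.
have H1 : \sum_(y <- s) pair_val y < 2 ^ x.1.+1.
  apply: IH => //; first exact: path_sorted Hp.
  by move: Hall; rewrite all_map.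
have H2 := pv_lt x Hx.
have H3 : 2 ^ x.1.+2 <= 2 ^ n.+1 by rewrite leq_exp2l.
rewrite expnS in H3; lia.
Qed.

Lemma sum_pow_lt n l : sorted gtn l -> all (fun y => y < n) l -> \sum_(j <- l) 2 ^ j < 2 ^ n.
Proof.
elim: l n => [|x l IH] n /=; first by rewrite big_nil expn_gt0.
move=> Hs /andP[Hxn _]; rewrite big_cons.
have Hall := order_path_min gtn_trans Hs.
have H1 : \sum_(j <- l) 2 ^ j < 2 ^ x.
  apply: IH; first exact: path_sorted Hs.
  by apply/allP => y Hy; move/allP: Hall => /(_ y Hy).
have H3 : 2 ^ x.+1 <= 2 ^ n by rewrite leq_exp2l.
rewrite expnS in H3; lia.
Qed.

Theorem lemma4p4 (m : nat) (ms : seq nat) :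
  0 < m ->
  ms != [::] ->
  sorted gtn ms ->
  m = \sum_(j <- ms) 2 ^ j ->
  forall k : nat, k != head 0 ms -> k != head 0 ms - 1 -> s_is_zero k m.
Proof.
case: ms => [|M ms] //= _ _ Hs Hm k Hk1 Hk2 s [].
case: s => [|x s] //= _ Hx Hsort /andP[Hxa Ha] Hms.
have Hall := order_path_min gtn_trans Hsort.
have Hup : \sum_(y <- s) pair_val y < 2 ^ x.1.+1.
  apply: sum_pv_lt => //; first exact: path_sorted Hsort.
  by move: Hall; rewrite all_map.
have Hlo := pv_ge x.
have Hlt := pv_lt x Hxa.
rewrite big_cons in Hms.
have HMall := order_path_min gtn_trans Hs.
have HM : \sum_(j <- ms) 2 ^ j < 2 ^ M.
  apply: sum_pow_lt; first exact: path_sorted Hs.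
  by apply/allP => y Hy; move/allP: HMall => /(_ y Hy).
rewrite big_cons in Hm.
have A : 2 ^ x.1 < 2 ^ M.+1 by rewrite expnS; lia.
have B : 2 ^ M < 2 ^ x.1.+2 by rewrite !expnS; rewrite expnS in Hup Hlt; lia.
rewrite ltn_exp2l // in A; rewrite ltn_exp2l // in B.
lia.
Qed.
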